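(* Let $(G,u,v,\alpha,\beta)$ be a Guvab with $\lim_{k\to\infty}W_k=0$. Then $\{W_k\}$ is eventually constant if and only if one of the following holds: (1) $\alpha=\beta=0$ and $N(u)=N(v)$; (2) $\alpha=\beta=\frac{1}{\deg u+1}$, $\{u,v\}\in E(G)$, and in the graph obtained by removing the edge $\{u,v\}$ from $G$, the vertices $u$ and $v$ have the same neighbor set; (3) $\alpha=\beta$ and $u=v$.
   Context: A Guvab is a tuple $(G,u,v,\alpha,\beta)$ where $G$ is a finite, connected, simple graph, $u,v\in V(G)$, and $\alpha,\beta\in[0,1]$ with $\alpha\le\beta$. A random walk on $G$ with starting vertex $w$ and laziness $\gamma$ is the Markov chain $R_0=w$ and, for $i\ge1$, $R_i=R_{i-1}$ with probability $\gamma$ and $R_i=t$ with probability $\frac{1-\gamma}{\deg(R_{i-1})}$ for each neighbor $t$ of $R_{i-1}$. $\mu_k$ is the distribution after $k$ steps of the walk from $u$ with laziness $\alpha$, $\nu_k$ that of the walk from $v$ with laziness $\beta$, and $W_k=W(\mu_k,\nu_k)$ is the Wasserstein ($L^1$ optimal transport) distance with respect to the graph distance. $N(w)$ is the neighbor set of $w$. A sequence $\{S_i\}$ is eventually constant if there is $N$ with $S_k=S_N$ for all $k\ge N$. *)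

(* Defs.v *)
From HB Require Import structures.
From mathcomp Require Import all_boot all_order all_algebra.
From mathcomp Require Import all_classical all_reals all_analysis.
Set Implicit Arguments. Unset Strict Implicit. Unset Printing Implicit Defensive.
Import Order.TTheory GRing.Theory Num.Theory.
Local Open Scope ring_scope.
Local Open Scope classical_set_scope.

Section Guvab.
Variables (T : finType) (e : rel T).

Definition simple_graph := symmetric e /\ irreflexive e.
Definition connected_graph := forall x y : T, connect e x y.

Definition nbhd (x : T) : {set T} := [set y | e x y].
Definition deg (x : T) : nat := #|nbhd x|.

Fixpoint within (n : nat) (x y : T) : bool :=
  match n with
  | 0 => x == y
  | n'.+1 => within n' x y || [exists z, within n' x z && e z y]
  end.

(* graph distance: least n with a walk of length n (< #|T| in a connected graph) *)
Definition gdist (x y : T) : nat := find (fun n => within n x y) (iota 0 #|T|).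

Variable R : realType.

Definition trans (g : R) (x y : T) : R :=
  if x == y then g else if e x y then (1 - g) / (deg x)%:R else 0.

Fixpoint walk_dist (g : R) (w : T) (k : nat) : T -> R :=
  match k with
  | 0 => fun x => (x == w)%:R
  | k'.+1 => fun y => \sum_(x : T) walk_dist g w k' x * trans g x y
  end.

Definition coupling (mu nu : T -> R) (pi : T -> T -> R) : Prop :=
  [/\ forall x y, 0 <= pi x y,
      forall x, \sum_(y : T) pi x y = mu x
    & forall y, \sum_(x : T) pi x y = nu y].

Definition wasserstein (mu nu : T -> R) : R :=
  inf [set c : R | exists pi, coupling mu nu pi /\
         c = \sum_(x : T) \sum_(y : T) pi x y * (gdist x y)%:R].

Definition W (u v : T) (a b : R) (k : nat) : R :=
  wasserstein (walk_dist a u k) (walk_dist b v k).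

Definition eventually_constant (s : nat -> R) : Prop :=
  exists N, forall k, (N <= k)%N -> s k = s N.

End Guvab.

(* Main.v *)
Require Import Defs.
From HB Require Import structures.
From mathcomp Require Import all_boot all_order all_algebra.
From mathcomp Require Import all_classical all_reals all_analysis.
From mathcomp Require Import ring lra.
Import Order.TTheory GRing.Theory Num.Theory.
Local Open Scope classical_set_scope.
Local Open Scope ring_scope.
Set Implicit Arguments. Unset Strict Implicit. Unset Printing Implicit Defensive.

Definition P0 (R : realType) (T : finType) (e : rel T) (x y : T) : R :=
  if e x y then (deg e x)%:R^-1 else 0.

Lemma transE (R : realType) (T : finType) (e : rel T) (g : R) x y :
  irreflexive e ->
  trans e g x y = g * (x == y)%:R + (1 - g) * P0 R e x y.
Proof.
move=> irr; rewrite /trans /P0; case: eqP => [->|_].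
  by rewrite irr mulr0 addr0 mulr1.
by case: (e x y); rewrite ?mulr0 add0r.
Qed.

Definition step (R : realType) (T : finType) (e : rel T) (c : R) (f : T -> R) :=
  fun y => \sum_x f x * trans e c x y.

Lemma walkS (R : realType) (T : finType) (e : rel T) (c : R) w k :
  walk_dist e c w k.+1 = step e c (walk_dist e c w k).
Proof. by []. Qed.

Lemma stepB (R : realType) (T : finType) (e : rel T) (c : R) f g :
  step e c (fun y => f y - g y) = fun y => step e c f y - step e c g y.
Proof.
apply: funext => y; rewrite /step -sumrB; apply: eq_bigr => x _; by rewrite mulrBl.
Qed.

Lemma step0 (R : realType) (T : finType) (e : rel T) (c : R) :
  step e c (fun _ => 0) = fun _ => 0.
Proof. apply: funext => y; rewrite /step big1 // => x _; by rewrite mul0r. Qed.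

Lemma deg_gt0 (T : finType) (e : rel T) x :
  connected_graph e -> (1 < #|T|)%N -> (0 < deg e x)%N.
Proof.
move=> con /card_gt1P [y1 [y2 [_ _ ne]]].
have [y ney] : exists y, y != x.
  case: (eqVneq y1 x) => [<-|h]; last by exists y1.
  by exists y2; rewrite eq_sym.
move: (con x y) => /connectP [p pth lst].
case: p pth lst => [|z p] /=; first by move=> _ yx; rewrite -yx eqxx in ney.
move=> /andP [exz _] _.
by rewrite /deg card_gt0; apply/set0Pn; exists z; rewrite inE.
Qed.

Lemma trans_sym (R : realType) (T : finType) (e : rel T) (c : R) x y :
  symmetric e ->
  trans e c x y / (deg e y)%:R = trans e c y x / (deg e x)%:R.
Proof.
move=> sym; rewrite /trans; case: (eqVneq x y) => [->//|nxy].
idtac.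
rewrite sym; case: (e y x); last by rewrite !mul0r.
by rewrite mulrAC.
Qed.

Definition ip (R : realType) (T : finType) (e : rel T) (f h : T -> R) :=
  \sum_y f y * h y / (deg e y)%:R.

Lemma ip_step (R : realType) (T : finType) (e : rel T) (c : R) f h :
  symmetric e ->
  ip e (step e c f) h = ip e f (step e c h).
Proof.
move=> sym; rewrite /ip /step.
transitivity (\sum_y \sum_x f x * (trans e c x y / (deg e y)%:R) * h y).
  apply: eq_bigr => y _; rewrite mulr_suml mulr_suml; apply: eq_bigr => x _.
  by rewrite -!mulrA [h y * _]mulrC.
rewrite exchange_big /=; apply: eq_bigr => x _.
rewrite mulr_sumr mulr_suml; apply: eq_bigr => y _.
by rewrite trans_sym //; ring.
Qed.

Lemma ip_self0 (R : realType) (T : finType) (e : rel T) (h : T -> R) :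
  (forall x, (0 < deg e x)%N) -> ip e h h = 0 -> h = fun _ => 0.
Proof.
move=> dpos H; apply: funext => y.
have := (psumr_eq0P _ H) y isT.
have: (forall i : T, true -> 0 <= h i * h i / (deg e i)%:R).
  by move=> i _; rewrite mulr_ge0 // ?mulr_ge0_le0 // -expr2 sqr_ge0.
move=> H0.
move=> /(_ H0) /eqP; rewrite mulf_eq0 invr_eq0 pnatr_eq0.
have -> : (deg e y == 0%N) = false by rewrite eqn0Ngt dpos.
by rewrite orbF mulf_eq0 orbb => /eqP.
Qed.

Lemma step_sq0 (R : realType) (T : finType) (e : rel T) (c : R) f :
  symmetric e -> (forall x, (0 < deg e x)%N) ->
  step e c (step e c f) = (fun _ => 0) -> step e c f = (fun _ => 0).
Proof.
move=> sym dpos H; apply: (ip_self0 dpos).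
rewrite ip_step // H /ip big1 // => y _; by rewrite mulr0 mul0r.
Qed.

Lemma seq_zero (R : realType) (T : finType) (e : rel T) (c : R) (F : nat -> T -> R) :
  symmetric e -> (forall x, (0 < deg e x)%N) ->
  (forall k, F k.+1 = step e c (F k)) ->
  forall N, F N = (fun _ => 0) -> forall k, F k.+1 = (fun _ => 0).
Proof.
move=> sym dpos HF N HN.
have fw : forall j, F (j + N)%N = (fun _ => 0).
  by elim=> [|j IH] //; rewrite addSn HF IH step0.
have dn : forall n j, F (j.+1 + n)%N = (fun _ => 0) -> F j.+1 = (fun _ => 0).
  elim=> [|n IH] j; first by rewrite addn0.
  move=> H; apply: IH; rewrite addSn HF; apply: step_sq0 => //.
  by rewrite -HF -HF -addSn -addnS.
move=> k; apply: (dn N k); exact: fw.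
Qed.

Lemma trans_ge0 (R : realType) (T : finType) (e : rel T) (g : R) x y :
  0 <= g -> g <= 1 -> 0 <= trans e g x y.
Proof.
move=> g0 g1; rewrite /trans; case: (x == y) => //; case: (e x y) => //.
by rewrite divr_ge0 // subr_ge0.
Qed.

Lemma walk_ge0 (R : realType) (T : finType) (e : rel T) (g : R) w k y :
  0 <= g -> g <= 1 -> 0 <= walk_dist e g w k y.
Proof.
move=> g0 g1; elim: k y => [|k IH] y /=; first by rewrite ler0n.
by apply: sumr_ge0 => x _; rewrite mulr_ge0 // trans_ge0.
Qed.

Lemma sumP0 (R : realType) (T : finType) (e : rel T) x :
  (0 < deg e x)%N -> \sum_y P0 R e x y = 1.
Proof.
move=> dp; rewrite /P0 -big_mkcond /= sumr_const.
have -> : #|[pred y | e x y]| = deg e x by rewrite /deg /nbhd cardsE.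
by rewrite -[_ *+ _]mulr_natr mulVf // pnatr_eq0 eqn0Ngt dp.
Qed.

Lemma sum_trans (R : realType) (T : finType) (e : rel T) (g : R) x :
  irreflexive e -> (0 < deg e x)%N -> \sum_y trans e g x y = 1.
Proof.
move=> irr dp; rewrite (eq_bigr _ (fun y _ => transE g x y irr)) big_split /=.
rewrite -mulr_sumr -mulr_sumr sumP0 // (bigD1 x) //= eqxx big1 ?addr0.
  by rewrite mulr1 mulr1 addrC subrK.
by move=> y; rewrite eq_sym => /negbTE ->.
Qed.

Lemma walk_sum (R : realType) (T : finType) (e : rel T) (g : R) w k :
  irreflexive e -> (forall x, (0 < deg e x)%N) -> \sum_y walk_dist e g w k y = 1.
Proof.
move=> irr dp; elim: k => [|k IH] /=.
  by rewrite (bigD1 w) //= eqxx big1 ?addr0 // => y /negbTE ->.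
rewrite exchange_big /= -{}IH; apply: eq_bigr => x _.
by rewrite -mulr_sumr sum_trans // mulr1.
Qed.

Lemma le_sum1 (R : realType) (T : finType) (F : T -> R) i :
  (forall j, 0 <= F j) -> F i <= \sum_j F j.
Proof.
move=> H; rewrite (bigD1 i) //= lerDl; exact: sumr_ge0.
Qed.

Lemma gdist_ge1 (T : finType) (e : rel T) x y :
  (1 < #|T|)%N -> x != y -> (1 <= gdist e x y)%N.
Proof.
move=> /ltnW; rewrite /gdist; case: #|T| => [//|n] _ nxy.
by rewrite /= (negbTE nxy).
Qed.

Lemma gdist_refl (T : finType) (e : rel T) x :
  (1 < #|T|)%N -> gdist e x x = 0%N.
Proof.
move=> /ltnW; rewrite /gdist; case: #|T| => [//|n] _.
by rewrite /= eqxx.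
Qed.

Definition cost (R : realType) (T : finType) (e : rel T) (pi : T -> T -> R) :=
  \sum_(x : T) \sum_(y : T) pi x y * (gdist e x y)%:R.

Lemma cost_ge0 (R : realType) (T : finType) (e : rel T) (pi : T -> T -> R) :
  (forall x y, 0 <= pi x y) -> 0 <= cost e pi.
Proof.
move=> H; apply: sumr_ge0 => x _; apply: sumr_ge0 => y _; by rewrite mulr_ge0.
Qed.

Lemma cost_lb1 (R : realType) (T : finType) (e : rel T) (mu nu : T -> R) pi x :
  (1 < #|T|)%N -> coupling mu nu pi -> mu x - nu x <= cost e pi.
Proof.
move=> T1 [p0 pm pn]; rewrite -pm -pn /cost.
apply: (@le_trans _ _ (\sum_y pi x y * (gdist e x y)%:R)); last first.
  apply: (@le_sum1 _ _ (fun x => \sum_y pi x y * (gdist e x y)%:R) x) => j.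
  by apply: sumr_ge0 => y _; rewrite mulr_ge0.
rewrite (bigD1 x) //= [X in _ - X](bigD1 x) //= [X in _ <= X](bigD1 x) //=.
rewrite gdist_refl // mulr0 add0r addrC addrKA.
rewrite lerBlDr -[X in X <= _]addr0; apply: lerD; last exact: sumr_ge0.
apply: ler_sum => y nyx; rewrite ler_peMr // ler1n; apply: gdist_ge1 => //.
by rewrite eq_sym.
Qed.

Lemma cost_lb2 (R : realType) (T : finType) (e : rel T) (mu nu : T -> R) pi x :
  (1 < #|T|)%N -> coupling mu nu pi -> nu x - mu x <= cost e pi.
Proof.
move=> T1 [p0 pm pn]; rewrite -pm -pn /cost exchange_big /=.
apply: (@le_trans _ _ (\sum_y pi y x * (gdist e y x)%:R)); last first.
  apply: (@le_sum1 _ _ (fun x => \sum_y pi y x * (gdist e y x)%:R) x) => j.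
  by apply: sumr_ge0 => y _; rewrite mulr_ge0.
rewrite (bigD1 x) //= [X in _ - X](bigD1 x) //= [X in _ <= X](bigD1 x) //=.
rewrite gdist_refl // mulr0 add0r addrC addrKA.
rewrite lerBlDr -[X in X <= _]addr0; apply: lerD; last exact: sumr_ge0.
apply: ler_sum => y nyx; rewrite ler_peMr // ler1n; apply: gdist_ge1 => //.
Qed.

Lemma wass_lb (R : realType) (T : finType) (e : rel T) (mu nu : T -> R) x :
  (1 < #|T|)%N -> (forall y, 0 <= mu y) -> (forall y, 0 <= nu y) ->
  \sum_y mu y = 1 -> \sum_y nu y = 1 ->
  mu x - nu x <= wasserstein e mu nu /\ nu x - mu x <= wasserstein e mu nu.
Proof.
move=> T1 m0 n0 m1 n1.
have ne : nonempty [set c : R | exists pi, coupling mu nu pi /\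
         c = \sum_(x : T) \sum_(y : T) pi x y * (gdist e x y)%:R].
  exists (cost e (fun x y => mu x * nu y)), (fun x y => mu x * nu y); split => //.
  split.
  - by move=> a b; rewrite mulr_ge0.
  - by move=> a; rewrite -mulr_sumr n1 mulr1.
  - by move=> b; rewrite -mulr_suml m1 mul1r.
split; apply: lb_le_inf => // c [pi [cp ->]].
  exact: cost_lb1.
exact: cost_lb2.
Qed.

Lemma wass_eq0 (R : realType) (T : finType) (e : rel T) (mu nu : T -> R) :
  (1 < #|T|)%N -> (forall y, 0 <= mu y) -> (forall y, 0 <= nu y) ->
  \sum_y mu y = 1 -> \sum_y nu y = 1 ->
  wasserstein e mu nu = 0 -> mu = nu.
Proof.
move=> T1 m0 n0 m1 n1 W0; apply: funext => x.
have [h1 h2] := wass_lb e x T1 m0 n0 m1 n1.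
rewrite W0 in h1 h2; apply: le_anti; rewrite -subr_le0 h1 /= -subr_le0 h2 //.
Qed.

Lemma wass_self (R : realType) (T : finType) (e : rel T) (mu : T -> R) :
  (1 < #|T|)%N -> (forall y, 0 <= mu y) -> wasserstein e mu mu = 0.
Proof.
move=> T1 m0.
rewrite /wasserstein; set S := [set c : R | _].
have S0 : S 0.
  exists (fun x y => (x == y)%:R * mu x); split.
    split.
    - by move=> a b; rewrite mulr_ge0 // ler0n.
    - move=> a; rewrite (bigD1 a) //= eqxx mul1r big1 ?addr0 //.
      by move=> b /negbTE; rewrite eq_sym => ->; rewrite mul0r.
    - move=> b; rewrite (bigD1 b) //= eqxx mul1r big1 ?addr0 //.
      by move=> a /negbTE ->; rewrite mul0r.
  rewrite big1 // => x _; rewrite big1 // => y _.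
  case: eqP => [->|_]; first by rewrite gdist_refl // mulr0.
  by rewrite !mul0r.
have lb : lbound S 0.
  by move=> c [pi [[p0 _ _] ->]]; exact: (cost_ge0 e p0).
apply: le_anti; rewrite lb_le_inf ?andbT; last by [].
  by apply: ge_inf => //; exists 0.
by exists 0.
Qed.

Lemma P0_e (R : realType) (T : finType) (e : rel T) x y :
  e x y -> P0 R e x y = (deg e x)%:R^-1.
Proof. by rewrite /P0 => ->. Qed.

Lemma P0_ne (R : realType) (T : finType) (e : rel T) x y :
  ~~ e x y -> P0 R e x y = 0.
Proof. by rewrite /P0 => /negbTE ->. Qed.

Lemma degR_neq0 (R : realType) (T : finType) (e : rel T) x :
  (0 < deg e x)%N -> (deg e x)%:R != 0 :> R.
Proof. by rewrite pnatr_eq0 -lt0n. Qed.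

Lemma eP0 (R : realType) (T : finType) (e : rel T) x y :
  (0 < deg e x)%N -> e x y = (P0 R e x y != 0).
Proof.
move=> dp; rewrite /P0; case: (e x y); last by rewrite eqxx.
by rewrite invr_eq0 degR_neq0.
Qed.

Lemma walk1 (R : realType) (T : finType) (e : rel T) (g : R) w y :
  walk_dist e g w 1 y = trans e g w y.
Proof.
rewrite /= (bigD1 w) //= eqxx mul1r big1 ?addr0 // => x /negbTE ->.
by rewrite mul0r.
Qed.

Lemma stepE (R : realType) (T : finType) (e : rel T) (g : R) f y :
  irreflexive e ->
  step e g f y = g * f y + (1 - g) * \sum_x f x * P0 R e x y.
Proof.
move=> irr; rewrite /step.
rewrite (eq_bigr (fun x => g * (f x * (x == y)%:R) + (1 - g) * (f x * P0 R e x y))).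
  rewrite big_split /= -!mulr_sumr; congr (g * _ + _).
  rewrite (bigD1 y) //= eqxx mulr1 big1 ?addr0 // => x /negbTE ->.
  by rewrite mulr0.
by move=> x _; rewrite transE //; ring.
Qed.

Lemma stable (R : realType) (T : finType) (e : rel T) (c : R) w N :
  symmetric e -> (forall x, (0 < deg e x)%N) ->
  step e c (walk_dist e c w N) = walk_dist e c w N ->
  walk_dist e c w 1 = walk_dist e c w N.
Proof.
move=> sym dpos H.
pose F k := fun y => walk_dist e c w k.+1 y - walk_dist e c w k y.
have HF : forall k, F k.+1 = step e c (F k).
  by move=> k; rewrite /F stepB.
have FN : F N = (fun _ => 0).
  by apply: funext => y; rewrite /F walkS H subrr.
have Z := seq_zero sym dpos HF FN.
have K : forall k, walk_dist e c w k.+1 = walk_dist e c w 1.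
  elim=> [//|k IH]; rewrite -IH; apply: funext => y.
  by apply/eqP; rewrite -subr_eq0; apply/eqP; move: (Z k) => /(congr1 (fun f => f y)).
by case: N H FN => [|n] H FN; [rewrite walkS H | rewrite K].
Qed.

Lemma classify_eq (R : realType) (T : finType) (e : rel T) (a : R) u v :
  symmetric e -> irreflexive e -> (forall x, (0 < deg e x)%N) -> 0 <= a ->
  (forall y, trans e a u y = trans e a v y) ->
  [\/ a = 0 /\ a = 0 /\ nbhd e u = nbhd e v,
       [/\ a = (deg e u + 1)%:R^-1, a = (deg e u + 1)%:R^-1, e u v
         & nbhd e u :\ v = nbhd e v :\ u]
     | a = a /\ u = v].
Proof.
move=> sym irr dpos a0 H.
case: (eqVneq u v) => [<-|nuv]; first by apply: Or33.
have HP : forall y, a * (u == y)%:R + (1 - a) * P0 R e u y =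
                    a * (v == y)%:R + (1 - a) * P0 R e v y.
  by move=> y; rewrite -!transE.
case: (eqVneq a 0) => [a00|an0].
  apply: Or31; split => //; split => //.
  apply/setP => y; rewrite !inE (eP0 R y (dpos u)) (eP0 R y (dpos v)).
  by move: (HP y); rewrite a00 !mul0r !add0r subr0 !mul1r => ->.
have Hu := HP u; have Hv := HP v.
rewrite eqxx (negbTE nuv) eq_sym (negbTE nuv) /P0 !irr !mulr0 !mulr1 addr0 add0r in Hu Hv.
have evu : e v u by move: Hu; case: (e v u) => //; rewrite mulr0 => /eqP; rewrite (negbTE an0).
have euv : e u v by rewrite sym.
rewrite evu in Hu; rewrite euv in Hv.
have a1 : 1 - a != 0.
  apply/negP => /eqP h; move: Hu; rewrite h mul0r; exact/eqP.
have du := degR_neq0 R (dpos u).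
apply: Or32.
have ad : a = (deg e u + 1)%:R^-1.
  apply: (mulIf (_ : (deg e u + 1)%:R != 0 :> R)); first by rewrite pnatr_eq0 addn1.
  rewrite mulVf ?pnatr_eq0 ?addn1 // -addn1 natrD mulrDr mulr1.
  rewrite eqxx add0r addr0 mulr1 in Hv.
  by rewrite -[in X in X + _]Hv divfK // subrK.
split => //.
apply/setP => y; rewrite !inE.
case: (eqVneq y u) => [->|nyu]; first by rewrite irr andbF.
case: (eqVneq y v) => [->|nyv] /=; first by rewrite irr.
rewrite (eP0 R y (dpos u)) (eP0 R y (dpos v)).
move: (HP y); rewrite eq_sym (negbTE nyu) eq_sym (negbTE nyv) !mulr0 !add0r.
by move=> /(mulfI a1) ->.
Qed.

Lemma classify_lt (R : realType) (T : finType) (e : rel T) (a b : R) u v :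
  symmetric e -> irreflexive e -> (forall x, (0 < deg e x)%N) ->
  0 <= a -> a < b -> b <= 1 ->
  (forall y, trans e a u y = trans e b v y) ->
  (forall y, \sum_x trans e a u x * P0 R e x y = trans e a u y) -> False.
Proof.
move=> sym irr dpos a0 ab b1 H S.
have HP : forall y, a * (u == y)%:R + (1 - a) * P0 R e u y =
                    b * (v == y)%:R + (1 - b) * P0 R e v y.
  by move=> y; rewrite -!transE.
have nab : a != b by rewrite lt_eqF.
case: (eqVneq u v) => [uv|nuv].
  move: (HP u); rewrite -uv eqxx /P0 irr !mulr0 !addr0 !mulr1 => /eqP.
  by rewrite (negbTE nab).
have Hu := HP u; have Hv := HP v.
rewrite eqxx (negbTE nuv) eq_sym (negbTE nuv) /P0 !irr !mulr0 !mulr1 addr0 add0r in Hu Hv.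
rewrite eqxx add0r addr0 mulr1 in Hv.
have b0 : b != 0 by rewrite gt_eqF // (le_lt_trans a0 ab).
have euv : e u v by move: Hv; case: (e u v) => //; rewrite mulr0 => h; move: b0; rewrite -h eqxx.
have evu : e v u by rewrite sym.
rewrite euv in Hv; rewrite evu in Hu.
case: (boolP [exists x, e u x && (x != v)]).
  move=> /existsP [x /andP [eux nxv]].
  have nxu : x != u by apply/negP => /eqP xu; rewrite xu irr in eux.
  move: (HP x); rewrite eq_sym (negbTE nxu) eq_sym (negbTE nxv) !mulr0 !add0r.
  rewrite (P0_e R eux) Hv.
  case: (boolP (e v x)) => [evx|nevx].
    by rewrite (P0_e R evx) -Hu => /eqP; rewrite eq_sym (negbTE nab).
  by rewrite (P0_ne R nevx) mulr0 => /eqP; rewrite (negbTE b0).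
rewrite negb_exists => /forallP nex.
have onlyv : forall x, e u x -> x = v.
  by move=> x eux; move: (nex x); rewrite eux /= negbK => /eqP.
have du1 : deg e u = 1%N.
  rewrite /deg (_ : nbhd e u = [set v]%SET) ?cards1 //.
  apply/setP => y; rewrite !inE; apply/idP/idP => [/onlyv ->//|/eqP ->//].
move: (S u).
rewrite (bigD1 v) //= big1 ?addr0; last first.
  move=> x nxv; rewrite P0_ne ?mulr0 //; apply/negP; rewrite sym => /onlyv.
  by move/eqP; rewrite (negbTE nxv).
have tuv : trans e a u v = b by rewrite H /trans eqxx.
have tuu : trans e a u u = a by rewrite /trans eqxx.
rewrite tuv tuu (P0_e R evu) => Hs.
rewrite du1 invr1 mulr1 in Hv.
have dv := degR_neq0 R (dpos v).
have : b = 1 - b.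
  by apply: (mulIf (_ : (deg e v)%:R^-1 != 0)); rewrite ?invr_eq0 // -Hu.
move=> hb; move: nab => /eqP; apply; lra.
Qed.

Lemma case2 (R : realType) (T : finType) (e : rel T) (a : R) u v :
  symmetric e -> irreflexive e -> (forall x, (0 < deg e x)%N) ->
  a = (deg e u + 1)%:R^-1 -> e u v -> nbhd e u :\ v = nbhd e v :\ u ->
  forall y, trans e a u y = trans e a v y.
Proof.
move=> sym irr dpos ha euv hn y.
have nuv : u != v by apply/negP => /eqP h; rewrite h irr in euv.
have evu : e v u by rewrite sym.
have dd : deg e v = deg e u.
  rewrite /deg (cardsD1 u (nbhd e v)) (cardsD1 v (nbhd e u)) hn !inE euv evu //.
have du := degR_neq0 R (dpos u).
have key : (1 - a) / (deg e u)%:R = a.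
  have h1 : (deg e u + 1)%:R != 0 :> R by rewrite pnatr_eq0 addn1.
  rewrite ha; rewrite natrD in h1 *.
  by field; rewrite du h1.
rewrite /trans.
case: (eqVneq u y) => [<-|nuy].
  by rewrite eq_sym (negbTE nuv) evu dd key.
case: (eqVneq v y) => [<-|nvy].
  by rewrite euv key.
have -> : e v y = e u y.
  move/setP: hn => /(_ y); rewrite !inE eq_sym nvy eq_sym nuy /=.
  by move=> ->.
by rewrite dd.
Qed.

Module LimAux.
Import numFieldNormedType.Exports.
Lemma evconst_lim0 (R : realType) (s : nat -> R) N :
  s @ \oo --> 0%R -> (forall k, (N <= k)%N -> s k = s N) -> s N = 0.
Proof.
move=> lim H.
have h : s @ \oo --> (s N)%R.
  by apply: cvg_near_cst; exists N => // k /= Hk; exact: H.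
exact: (cvg_unique _ h lim).
Qed.
End LimAux.

Lemma walk_eq_step (R : realType) (T : finType) (e : rel T) (a : R) u v :
  (forall y, trans e a u y = trans e a v y) ->
  forall k, walk_dist e a u k.+1 = walk_dist e a v k.+1.
Proof.
move=> H; elim=> [|k IH].
  by apply: funext => y; rewrite !walk1.
by rewrite walkS IH.
Qed.

Unset Implicit Arguments.

Theorem theorem6p6 (R : realType) (T : finType) (e : rel T) (u v : T) (a b : R) :
  simple_graph e -> connected_graph e -> (1 < #|T|)%N ->
  0 <= a -> a <= b -> b <= 1 ->
  (W e u v a b) @ \oo --> 0%R ->
  (eventually_constant (W e u v a b) <->
   [\/ a = 0 /\ b = 0 /\ nbhd e u = nbhd e v,
       [/\ a = (deg e u + 1)%:R^-1, b = (deg e u + 1)%:R^-1, e u v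
         & nbhd e u :\ v = nbhd e v :\ u]
     | a = b /\ u = v]).
Proof.
move=> [sym irr] con T1 a0 ab b1 lim.
have dpos : forall x, (0 < deg e x)%N by move=> x; exact: deg_gt0.
have b0 : 0 <= b by exact: le_trans ab.
have a1 : a <= 1 by exact: le_trans b1.
have Weq : forall k, W e u v a b k = 0 -> walk_dist e a u k = walk_dist e b v k.
  move=> k; apply: wass_eq0 => //.
  - by move=> y; exact: walk_ge0.
  - by move=> y; exact: walk_ge0.
  - exact: walk_sum.
  - exact: walk_sum.
split.
  move=> [N HN].
  have WN := LimAux.evconst_lim0 lim HN.
  have Wk : forall k, (N <= k)%N -> walk_dist e a u k = walk_dist e b v k.
    by move=> k Hk; apply: Weq; rewrite HN.
  case: (eqVneq a b) => [eab|nab].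
    subst b.
    pose F k := fun y => walk_dist e a u k y - walk_dist e a v k y.
    have HF : forall k, F k.+1 = step e a (F k) by move=> k; rewrite /F stepB.
    have FN : F N = (fun _ => 0) by apply: funext => y; rewrite /F Wk // subrr.
    have F1 := seq_zero sym dpos HF FN 0.
    have Ht : forall y, trans e a u y = trans e a v y.
      move=> y; rewrite -!walk1; apply/eqP; rewrite -subr_eq0; apply/eqP.
      exact: (congr1 (fun f => f y) F1).
    have := classify_eq sym irr dpos a0 Ht.
    by case=> [[h1 [h2 h3]]|[h1 h2 h3 h4]|[h1 h2]]; [apply: Or31|apply: Or32|apply: Or33].
  have altb : a < b by rewrite lt_neqAle nab.
  exfalso.
  set m := walk_dist e a u N.
  have mN : walk_dist e b v N = m by rewrite -Wk.
  have mN1 : step e a m = step e b m.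
    by rewrite -walkS -mN -walkS; apply: Wk.
  have Sm : forall y, \sum_x m x * P0 R e x y = m y.
    move=> y; move: (congr1 (fun f => f y) mN1); rewrite /= !stepE // => h.
    have : (a - b) * (m y - \sum_x m x * P0 R e x y) = 0.
      rewrite mulrBr !mulrBl; move: h; lra.
    by move/eqP; rewrite mulf_eq0 subr_eq0 (negbTE nab) /= subr_eq0 => /eqP.
  have sa : step e a m = m.
    by apply: funext => y; rewrite stepE // Sm; ring.
  have sb : step e b (walk_dist e b v N) = walk_dist e b v N.
    by rewrite mN; apply: funext => y; rewrite stepE // Sm; ring.
  have ma := stable sym dpos sa.
  have mb := stable sym dpos sb.
  rewrite mN in mb.
  apply: (classify_lt sym irr dpos a0 altb b1 (u:=u) (v:=v)).
    by move=> y; rewrite -!walk1 ma mb.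
  move=> y; under eq_bigr => x _ do rewrite -walk1 ma.
  by rewrite -walk1 ma Sm.
move=> Hc.
have [eab Ht] : a = b /\ forall y, trans e a u y = trans e a v y.
  case: Hc => [[-> [-> H]]|[-> -> euv H]|[-> ->]] //; split => // y.
  - rewrite !transE // !mul0r !add0r /P0.
    have -> : e u y = e v y by move/setP: H => /(_ y); rewrite !inE.
    by have -> : deg e u = deg e v by rewrite /deg H.
  - by apply: case2.
subst b.
exists 1%N => k Hk.
case: k Hk => // k _.
rewrite /W (walk_eq_step Ht k) (walk_eq_step Ht 0).
by rewrite !wass_self //; move=> y; exact: walk_ge0.
Qed.
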